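(* Consider repetition-redundancy (Chase-combining) HARQ as described in the context, and let $k\ge 2$. Then the decoding-error events $\mathsf{ERR}_1,\ldots,\mathsf{ERR}_k$ are not independent in general: there exist SNR values $\gamma_1,\ldots,\gamma_k\ge 0$ for which $\Pr\{\mathsf{ERR}_{k-1},\mathsf{ERR}_k\}\neq\Pr\{\mathsf{ERR}_{k-1}\}\Pr\{\mathsf{ERR}_k\}$.
   Context: A message $\mathsf{m}\in\{0,1\}^{N_b}$ is encoded into a codeword $\mathbf{x}=\mathrm{ENC}[\mathsf{m}]\in\mathcal{X}^{N_s}$, $\mathcal{X}$ a complex constellation. In round $l$ the receiver observes $\mathbf{y}_l=\sqrt{\gamma_l}\,\mathbf{x}+\mathbf{z}_l$, where $\gamma_l\ge 0$ is the SNR of round $l$ and $\mathbf{z}_l$ are independent zero-mean unit-variance Gaussian noise vectors. With accumulated SNR $\gamma_{[k]}=\sum_{l=1}^k\gamma_l$ (assumed positive), the receiver forms the maximum-ratio-combined signal $\mathbf{y}_{[k]}=\frac{1}{\sqrt{\gamma_{[k]}}}\sum_{l=1}^k\sqrt{\gamma_l}\,\mathbf{y}_l=\sqrt{\gamma_{[k]}}\mathbf{x}+\mathbf{z}_{[k]}$ and decodes $\hat{\mathsf{m}}_k=\mathrm{DEC}[\mathbf{y}_{[k]}]$ with a fixed (deterministic) decoder $\mathrm{DEC}$. The decoding error after round $k$ is $\mathsf{ERR}_k=\{\hat{\mathsf{m}}_k\neq\mathsf{m}\}$, and $\Pr\{\mathsf{ERR}_k\}=\mathrm{PER}(\gamma_{[k]})$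 for a function $\mathrm{PER}$ (packet error rate). It is assumed that $0<\mathrm{PER}(\gamma)<1$ for some $\gamma>0$. *)

(* Defs.v *)
From HB Require Import structures.
From mathcomp Require Import all_boot all_order all_algebra.
From mathcomp Require Import all_classical all_reals all_analysis.
From mathcomp Require Import normal_distribution.
From mathcomp Require Import complex.
Set Implicit Arguments. Unset Strict Implicit. Unset Printing Implicit Defensive.
Import Order.TTheory GRing.Theory Num.Theory.
Local Open Scope classical_set_scope.
Local Open Scope ring_scope.
Local Open Scope complex_scope.

Section HARQ.
Context {R : realType} {d : measure_display} {T : measurableType d}.
Context (Nb Ns : nat).

Definition msg := (Nb.-tuple bool).

Definition acc_snr (gamma : nat -> R) (j : nat) : R :=
  \sum_(1 <= l < j.+1) gamma l.

Definition rx_signal (ENC : msg -> 'I_Ns -> R[i]) (m : T -> msg)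
  (z : nat -> T -> 'I_Ns -> R[i]) (gamma : nat -> R) (l : nat) (t : T)
  : 'I_Ns -> R[i] :=
  fun i => (Num.sqrt (gamma l))%:C * ENC (m t) i + z l t i.

Definition mrc_signal (ENC : msg -> 'I_Ns -> R[i]) (m : T -> msg)
  (z : nat -> T -> 'I_Ns -> R[i]) (gamma : nat -> R) (j : nat) (t : T)
  : 'I_Ns -> R[i] :=
  fun i => ((Num.sqrt (acc_snr gamma j))^-1)%:C *
    \sum_(1 <= l < j.+1) (Num.sqrt (gamma l))%:C * rx_signal ENC m z gamma l t i.

Definition err_event (ENC : msg -> 'I_Ns -> R[i]) (DEC : ('I_Ns -> R[i]) -> msg)
  (m : T -> msg) (z : nat -> T -> 'I_Ns -> R[i]) (gamma : nat -> R) (j : nat)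
  : set T :=
  [set t | DEC (mrc_signal ENC m z gamma j t) != m t].

(* Noise model for rounds 1..k: each z_l is a vector of i.i.d. circularly-
   symmetric complex Gaussian entries with zero mean and unit variance
   (real and imaginary parts i.i.d. N(0,1/2)); the real/imaginary parts of all
   entries of all z_1..z_k are mutually independent and independent of the
   message m (which is a measurable random variable). *)
Definition noise_comp (k : nat) (z : nat -> T -> 'I_Ns -> R[i])
  (c : 'I_k * 'I_Ns * bool) : T -> R :=
  fun t => let: (l, i, b) := c in
    if b then complex.Re (z (l.+1)%N t i) else complex.Im (z (l.+1)%N t i).

Definition noise_model (P : probability T R) (k : nat) (m : T -> msg)
  (z : nat -> T -> 'I_Ns -> R[i]) : Prop :=
  [/\ (forall A : set msg, measurable (m @^-1` A)),
      (forall c : 'I_k * 'I_Ns * bool, measurable_fun setT (noise_comp z c)),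
      (forall (c : 'I_k * 'I_Ns * bool) (B : set R), measurable B ->
         P (noise_comp z c @^-1` B) = normal_prob 0 (Num.sqrt (2^-1)) B) &
      (forall (A : set msg) (B : 'I_k * 'I_Ns * bool -> set R),
         (forall c, measurable (B c)) ->
         P (m @^-1` A `&` \bigcap_(c in [set: 'I_k * 'I_Ns * bool])
                              (noise_comp z c @^-1` B c))
         = (P (m @^-1` A) * \prod_(c : 'I_k * 'I_Ns * bool)
                              P (noise_comp z c @^-1` B c))%E)].
End HARQ.

(* Main.v *)
Require Import Defs.
From HB Require Import structures.
From mathcomp Require Import all_boot all_order all_algebra.
From mathcomp Require Import all_classical all_reals all_analysis.
From mathcomp Require Import normal_distribution.
From mathcomp Require Import complex.
Import Order.TTheory GRing.Theory Num.Theory.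
Local Open Scope classical_set_scope.
Local Open Scope ring_scope.
Local Open Scope complex_scope.

Theorem proposition1 (R : realType) (d : measure_display) (T : measurableType d)
  (P : probability T R) (Nb Ns : nat) (X : set R[i])
  (ENC : msg Nb -> 'I_Ns -> R[i]) (DEC : ('I_Ns -> R[i]) -> msg Nb)
  (m : T -> msg Nb) (z : nat -> T -> 'I_Ns -> R[i]) (PER : R -> R) (k : nat) :
  (2 <= k)%N ->
  (forall (mm : msg Nb) (i : 'I_Ns), X (ENC mm i)) ->
  noise_model P k m z ->
  (forall (gamma : nat -> R) (j : nat), (1 <= j <= k)%N ->
     (forall l : nat, (1 <= l <= j)%N -> 0 <= gamma l) ->
     0 < acc_snr gamma j ->
     P (err_event ENC DEC m z gamma j) = (PER (acc_snr gamma j))%:E) ->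
  (exists g : R, 0 < g /\ 0 < PER g < 1) ->
  exists gamma : nat -> R,
    (forall l : nat, (1 <= l <= k)%N -> 0 <= gamma l) /\
    0 < acc_snr gamma k.-1 /\
    P (err_event ENC DEC m z gamma k.-1 `&` err_event ENC DEC m z gamma k)
      <> (P (err_event ENC DEC m z gamma k.-1) *
          P (err_event ENC DEC m z gamma k))%E.
Proof.
move=> hk _ _ hPER [g [g0 /andP[p0 p1]]].
case: k hk hPER => [|[|k']] // _ hPER.
set gamma := fun l : nat => if l == 1%N then g else 0.
have gge : forall l, 0 <= gamma l.
  by move=> l; rewrite /gamma /=; case: ifP => // _; exact: ltW.
have acc1 : acc_snr gamma k'.+1 = g.
  rewrite /acc_snr big_nat_recl // big_nat_cond big1 ?addr0; first by rewrite /gamma.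
  by move=> i /andP[/andP[hi _] _]; rewrite /gamma /= eqSS; case: i hi.
have eqE : err_event ENC DEC m z gamma k'.+2 = err_event ENC DEC m z gamma k'.+1.
  rewrite /err_event /mrc_signal.
  have -> : acc_snr gamma k'.+2 = acc_snr gamma k'.+1.
    by rewrite /acc_snr [in LHS]big_nat_recr //= {3}/gamma /= addr0.
  apply/seteqP; split => t /=;
  (have -> // : (fun i => ((Num.sqrt (acc_snr gamma k'.+1))^-1)%:C *
      \sum_(1 <= l < k'.+3) (Num.sqrt (gamma l))%:C * rx_signal ENC m z gamma l t i)
   = (fun i => ((Num.sqrt (acc_snr gamma k'.+1))^-1)%:C *
      \sum_(1 <= l < k'.+2) (Num.sqrt (gamma l))%:C * rx_signal ENC m z gamma l t i));
  apply: funext => i; rewrite [in LHS]big_nat_recr //= {2}/gamma /= sqrtr0 mul0r addr0 //.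
exists gamma; split; first by move=> l _; exact: gge.
rewrite /= acc1; split => //.
have hE : P (err_event ENC DEC m z gamma k'.+1) = (PER g)%:E.
  rewrite -acc1; apply: hPER; [by rewrite /= ltnS leqnSn | by move=> l _; exact: gge | by rewrite acc1].
rewrite eqE setIid hE.
rewrite -EFinM => /eqP; rewrite eqe => /eqP h.
have : PER g * (1 - PER g) = 0 by rewrite mulrBr mulr1 -h subrr.
move/eqP; rewrite mulf_eq0 subr_eq0 => /orP[/eqP h0|/eqP h1].
  by move: p0; rewrite h0 ltxx.
by move: p1; rewrite -h1 ltxx.
Qed.
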